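(* Let $\mathbb{K}$ be a field and $\mathscr{C}$ the category whose objects are associative $\mathbb{K}$-algebras and whose morphisms $X\to Y$ are $\mathbb{K}$-algebra homomorphisms $\varphi$ such that $\varphi(X)$ is an ideal of $Y$ (this category has pullbacks, computed as in $\mathbf{Set}$). Let $M=\mathbb{Z}_2=\{0,1\}$ under addition modulo $2$ and $X$ a unital nonzero $\mathbb{K}$-algebra. Let $\beta$ be the global action of $M$ on $X\times X$ with $\beta_1(x,y)=(y,x)$, let $\iota\colon X\to X\times X$, $\iota(x)=(x,0)$, and let $\alpha$ be the restriction of $\beta$ to $X$ via $\iota$ (so $\operatorname{dom}\alpha_1=\{0\}$). Then $(\beta,\iota)$ is a universal globalization of $\alpha$, but $\iota$ is not a reflection of $\alpha$ in $\mathrm{Act}_M(\mathscr{C})$; consequently $\alpha$ has no reflection in $\mathrm{Act}_M(\mathscr{C})$.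
   Context: A partial action datum of $M$ on an object $X$ of a category with pullbacks $\mathscr{C}$ assigns to each $m\in M$ an isomorphism class of spans $[\operatorname{dom}\alpha_m,\iota_m,\alpha_m]$ with $\iota_m\colon\operatorname{dom}\alpha_m\to X$ a monomorphism and $\alpha_m\colon\operatorname{dom}\alpha_m\to X$. A global action of $M$ on $Y$ is a family of morphisms $\beta_m\colon Y\to Y$ with $\beta_e=\mathrm{id}_Y$, $\beta_n\circ\beta_m=\beta_{nm}$. A datum morphism from $\alpha$ to a global action $\gamma$ on $Z$ is a morphism $f\colon X\to Z$ with $\gamma_m\circ f\circ\iota_m=f\circ\alpha_m$ for all $m$; between global actions, datum morphisms are the $g$ with $g\circ\beta_m=\gamma_m\circ g$. $\mathrm{Act}_M(\mathscr{C})$ is the category of global actions with these morphisms. Given a global action $\beta$ on $Y$ and a monomorphism $\iota\colon X\to Y$, the restriction of $\beta$ via $\iota$ is the datum $\alpha$ on $X$ such that for each $m$ the square $\beta_m\circ\iota\circ\iota_m=\iota\circ\alpha_m$ is a pullback. A globalization of $\alpha$ is a pair $(\beta,\iota)$ with $\beta$ global on $Y$ and $\iota\colon X\to Y$ a monomorphism such that $\alpha$ is the restriction of $\beta$ via $\iota$; it is universal if for every globalization $(\gamma,\kappa)$ of $\alpha$ there is a unique datum morphism $\kappa'\colon\beta\to\gamma$ with $\kappa'\circ\iota=\kappa$. A reflection of $\alpha$ in $\mathrm{Act}_M(\mathscr{C})$ is a datum morphism $r\colon\alpha\to\beta$ with $\beta$ global such that for every datum morphism $f\colon\alpha\to\gamma$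 with $\gamma$ global there is a unique datum morphism $f'\colon\beta\to\gamma$ with $f'\circ r=f$. *)

(* Defs.v *)
From HB Require Import structures.
From mathcomp Require Import all_boot all_order all_algebra.
Set Implicit Arguments. Unset Strict Implicit. Unset Printing Implicit Defensive.
Import GRing.Theory.
Local Open Scope ring_scope.

Section NCAlg.
Variable K : fieldType.

Record ncalg := NCAlg {
  nc_car :> lmodType K;
  nc_mul : nc_car -> nc_car -> nc_car;
  nc_mulA : forall x y z, nc_mul x (nc_mul y z) = nc_mul (nc_mul x y) z;
  nc_mulDl : forall x y z, nc_mul (x + y) z = nc_mul x z + nc_mul y z;
  nc_mulDr : forall x y z, nc_mul x (y + z) = nc_mul x y + nc_mul x z;
  nc_mulZl : forall (a : K) x y, nc_mul (a *: x) y = a *: nc_mul x y;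
  nc_mulZr : forall (a : K) x y, nc_mul x (a *: y) = a *: nc_mul x y
}.

Definition ncalg_of_alg (A : algType K) : ncalg :=
  @NCAlg A (@GRing.mul A) (@mulrA A) (@mulrDl A) (@mulrDr A)
    (fun a x y => esym (scalerAl a x y)) (fun a x y => esym (scalerAr a x y)).

Section Prod.
Variables A B : ncalg.
Definition prod_mul (p q : (A * B)%type) : (A * B)%type :=
  (nc_mul p.1 q.1, nc_mul p.2 q.2).
Lemma prod_mulA : forall x y z, prod_mul x (prod_mul y z) = prod_mul (prod_mul x y) z.
Proof. by move=> [? ?] [? ?] [? ?]; rewrite /prod_mul /= !nc_mulA. Qed.
Lemma prod_mulDl : forall x y z, prod_mul (x + y) z = prod_mul x z + prod_mul y z.
Proof. by move=> [? ?] [? ?] [? ?]; rewrite /prod_mul /= !nc_mulDl. Qed.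
Lemma prod_mulDr : forall x y z, prod_mul x (y + z) = prod_mul x y + prod_mul x z.
Proof. by move=> [? ?] [? ?] [? ?]; rewrite /prod_mul /= !nc_mulDr. Qed.
Lemma prod_mulZl : forall (a : K) x y, prod_mul (a *: x) y = a *: prod_mul x y.
Proof. by move=> a [? ?] [? ?]; rewrite /prod_mul /= !nc_mulZl. Qed.
Lemma prod_mulZr : forall (a : K) x y, prod_mul x (a *: y) = a *: prod_mul x y.
Proof. by move=> a [? ?] [? ?]; rewrite /prod_mul /= !nc_mulZr. Qed.
Definition nc_prod : ncalg :=
  @NCAlg (A * B)%type prod_mul prod_mulA prod_mulDl prod_mulDr prod_mulZl prod_mulZr.
End Prod.

(** Morphisms of C: K-algebra homomorphisms whose image is a (two-sided)
    ideal of the codomain.  (The image is a subspace by linearity.) *)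
Definition nc_hom (A B : ncalg) (f : A -> B) : Prop :=
  [/\ forall (a : K) (x y : A), f (a *: x + y) = a *: f x + f y,
      forall x y : A, f (nc_mul x y) = nc_mul (f x) (f y),
      forall (x : A) (y : B), exists x' : A, nc_mul y (f x) = f x' &
      forall (x : A) (y : B), exists x' : A, nc_mul (f x) y = f x'].

Definition nc_mono (A B : ncalg) (f : A -> B) : Prop :=
  nc_hom f /\
  forall (Z : ncalg) (g h : Z -> A), nc_hom g -> nc_hom h ->
    f \o g =1 f \o h -> g =1 h.

Definition nc_pullback (A B C P : ncalg) (f : A -> C) (g : B -> C)
    (p1 : P -> A) (p2 : P -> B) : Prop :=
  [/\ nc_hom p1, nc_hom p2, f \o p1 =1 g \o p2 &
      forall (Q : ncalg) (q1 : Q -> A) (q2 : Q -> B),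
        nc_hom q1 -> nc_hom q2 -> f \o q1 =1 g \o q2 ->
        exists u : Q -> P,
          [/\ nc_hom u, p1 \o u =1 q1, p2 \o u =1 q2 &
              forall v : Q -> P, nc_hom v -> p1 \o v =1 q1 -> p2 \o v =1 q2 ->
                v =1 u]].

Section Actions.
Variables (M : Type) (op : M -> M -> M) (e : M).

(** A partial action datum of M on X: for each m a span
    dom_m --inc_m--> X, dom_m --act_m--> X with inc_m a monomorphism.
    (Spans are taken as representatives; all notions below are invariant
    under isomorphism of spans.) *)
Record datum (X : ncalg) := Datum {
  ddom : M -> ncalg;
  dinc : forall m, ddom m -> X;
  dact : forall m, ddom m -> X;
  dinc_mono : forall m, nc_mono (@dinc m);
  dact_hom : forall m, nc_hom (@dact m)
}.
Arguments ddom {X} d m.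
Arguments dinc {X} d m _.
Arguments dact {X} d m _.

Definition is_global (Y : ncalg) (b : M -> Y -> Y) : Prop :=
  [/\ forall m, nc_hom (b m), b e =1 id &
      forall n m, b n \o b m =1 b (op n m)].

Definition datum_mor (X Z : ncalg) (a : datum X) (g : M -> Z -> Z)
    (f : X -> Z) : Prop :=
  nc_hom f /\ forall m, g m \o f \o dinc a m =1 f \o dact a m.

Definition global_mor (Y Z : ncalg) (b : M -> Y -> Y) (g : M -> Z -> Z)
    (f : Y -> Z) : Prop :=
  nc_hom f /\ forall m, f \o b m =1 g m \o f.

Definition is_restriction (X Y : ncalg) (a : datum X) (b : M -> Y -> Y)
    (i : X -> Y) : Prop :=
  forall m, nc_pullback (b m \o i) i (dinc a m) (dact a m).

Definition is_globalization (X Y : ncalg) (a : datum X) (b : M -> Y -> Y)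
    (i : X -> Y) : Prop :=
  [/\ is_global b, nc_mono i & is_restriction a b i].

Definition is_universal_globalization (X Y : ncalg) (a : datum X)
    (b : M -> Y -> Y) (i : X -> Y) : Prop :=
  is_globalization a b i /\
  forall (Z : ncalg) (g : M -> Z -> Z) (k : X -> Z),
    is_globalization a g k ->
    exists k' : Y -> Z,
      [/\ global_mor b g k', k' \o i =1 k &
          forall k'' : Y -> Z, global_mor b g k'' -> k'' \o i =1 k -> k'' =1 k'].

Definition is_reflection (X Y : ncalg) (a : datum X) (b : M -> Y -> Y)
    (r : X -> Y) : Prop :=
  [/\ is_global b, datum_mor a b r &
      forall (Z : ncalg) (g : M -> Z -> Z) (f : X -> Z),
        is_global g -> datum_mor a g f ->
        exists f' : Y -> Z,
          [/\ global_mor b g f', f' \o r =1 f &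
              forall f'' : Y -> Z, global_mor b g f'' -> f'' \o r =1 f ->
                f'' =1 f']].

Definition has_reflection (X : ncalg) (a : datum X) : Prop :=
  exists (Y : ncalg) (b : M -> Y -> Y) (r : X -> Y), is_reflection a b r.

End Actions.
End NCAlg.

Definition Z2op (n m : 'Z_2) : 'Z_2 := n + m.

Definition swap_action (K : fieldType) (X : ncalg K) (m : 'Z_2)
    (p : nc_prod X X) : nc_prod X X :=
  if m == 0 then p else (p.2, p.1).

Definition inl_zero (K : fieldType) (X : ncalg K) (x : X) : nc_prod X X :=
  (x, 0).

(* Main.v *)
From HB Require Import structures.
Require Import Defs.
From mathcomp Require Import all_boot all_order all_algebra.
Set Implicit Arguments. Unset Strict Implicit. Unset Printing Implicit Defensive.
Import GRing.Theory.
Local Open Scope ring_scope.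

Section Gen.
Variable K : fieldType.
Implicit Types A B C : ncalg K.

Lemma hom0 A B (f : A -> B) : nc_hom f -> f 0 = 0.
Proof.
case=> lin _ _ _; have := lin 1 0 0; rewrite !scale1r addr0.
move/(congr1 (fun z => z - f 0)); rewrite addrK subrr => h; by rewrite {1}h.
Qed.
Lemma homD A B (f : A -> B) : nc_hom f -> forall x y, f (x + y) = f x + f y.
Proof. by case=> lin _ _ _ x y; have := lin 1 x y; rewrite !scale1r. Qed.
Lemma homZ A B (f : A -> B) : nc_hom f -> forall a x, f (a *: x) = a *: f x.
Proof. move=> hf a x; case: (hf) => lin _ _ _; have := lin a x 0; rewrite !addr0 => ->.
by rewrite (hom0 hf) addr0. Qed.
Lemma homM A B (f : A -> B) : nc_hom f -> forall x y, f (nc_mul x y) = nc_mul (f x) (f y).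
Proof. by case. Qed.
Lemma mul0nc A (z : A) : nc_mul 0 z = 0.
Proof. have := nc_mulDl 0 0 z; rewrite addr0; move/(congr1 (fun w => w - nc_mul 0 z)); rewrite addrK subrr => h; by rewrite {2}h. Qed.
Lemma mulnc0 A (z : A) : nc_mul z 0 = 0.
Proof. have := nc_mulDr z 0 0; rewrite addr0; move/(congr1 (fun w => w - nc_mul z 0)); rewrite addrK subrr => h; by rewrite {2}h. Qed.
Lemma hom_id A : nc_hom (@id A).
Proof. split=> // x y; [exists (nc_mul y x)|exists (nc_mul x y)]; by []. Qed.

Lemma Z2cases (m : 'Z_2) : m = 0 \/ m = 1.
Proof. case: m => [[|[|m]] Hm]; [left|right|done]; exact: val_inj. Qed.
End Gen.
Section Sub.
Variables (K : fieldType) (A : ncalg K) (P : pred A).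
Hypothesis P0 : P 0.
Hypothesis PZD : forall (a : K) x y, P x -> P y -> P (a *: x + y).
Hypothesis PM : forall x y, P x -> P y -> P (nc_mul x y).

Definition subP : pred A := P.
Lemma subP_closed : GRing.submod_closed subP.
Proof. split; first exact: P0. move=> a x y; exact: PZD. Qed.
HB.instance Definition _ := GRing.isSubmodClosed.Build K A subP subP_closed.
Definition subT := {x : A | x \in subP}.
HB.instance Definition _ := [isSub of subT for (@sval A (fun x => x \in subP))].
HB.instance Definition _ := [Choice of subT by <:].
HB.instance Definition _ := [SubChoice_isSubLmodule of subT by <:].
Definition subT_mul (x y : subT) : subT := exist _ (nc_mul (val x) (val y)) (PM (valP x) (valP y)).
Lemma subT_mulA : forall x y z, subT_mul x (subT_mul y z) = subT_mul (subT_mul x y) z.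
Proof. by move=> x y z; apply: val_inj; rewrite /= nc_mulA. Qed.
Lemma subT_mulDl : forall x y z, subT_mul (x + y) z = subT_mul x z + subT_mul y z.
Proof. by move=> x y z; apply: val_inj; rewrite /= nc_mulDl. Qed.
Lemma subT_mulDr : forall x y z, subT_mul x (y + z) = subT_mul x y + subT_mul x z.
Proof. by move=> x y z; apply: val_inj; rewrite /= nc_mulDr. Qed.
Lemma subT_mulZl : forall (a : K) x y, subT_mul (a *: x) y = a *: subT_mul x y.
Proof. by move=> a x y; apply: val_inj; rewrite /= nc_mulZl. Qed.
Lemma subT_mulZr : forall (a : K) x y, subT_mul x (a *: y) = a *: subT_mul x y.
Proof. by move=> a x y; apply: val_inj; rewrite /= nc_mulZr. Qed.
Definition subA : ncalg K := @NCAlg K subT subT_mul subT_mulA subT_mulDl subT_mulDr subT_mulZl subT_mulZr.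
Lemma subA_val_lin (a : K) (x y : subA) : val (a *: x + y) = a *: val x + val y.
Proof. by []. Qed.
End Sub.

Section Ex.
Variables (K : fieldType) (X : algType K).
Notation XA := (ncalg_of_alg X).
Notation XX := (nc_prod XA XA).
Notation sw := (@swap_action K XA).
Notation inl := (@inl_zero K XA).

Lemma sw0 (p : XX) : sw 0 p = p. Proof. by rewrite /swap_action eqxx. Qed.
Lemma sw1 (p : XX) : sw 1 p = (p.2, p.1). Proof. by []. Qed.

Lemma sw_hom m : nc_hom (sw m).
Proof.
case: (Z2cases m) => ->; first by rewrite /swap_action eqxx; exact: hom_id.
split.
- by move=> a [x1 x2] [y1 y2].
- by move=> [x1 x2] [y1 y2].
- by move=> [x1 x2] [y1 y2]; exists (nc_mul y2 x1, nc_mul y1 x2).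
- by move=> [x1 x2] [y1 y2]; exists (nc_mul x1 y2, nc_mul x2 y1).
Qed.

Lemma sw_global : is_global Z2op 0 sw.
Proof.
split; [exact: sw_hom | exact: sw0 |].
move=> n m p /=; rewrite /Z2op.
by case: (Z2cases n) => ->; case: (Z2cases m) => ->; case: p.
Qed.

Lemma inl_hom : nc_hom inl.
Proof.
split.
- by move=> a x y; rewrite /inl_zero; congr pair => /=; rewrite scaler0 addr0.
- by move=> x y; rewrite /inl_zero /= /prod_mul /= mul0r.
- by move=> x [y1 y2]; exists (y1 * x); rewrite /inl_zero /= /prod_mul /= mulr0.
- by move=> x [y1 y2]; exists (x * y1); rewrite /inl_zero /= /prod_mul /= mul0r.
Qed.

Lemma inl_mono : nc_mono inl.
Proof.
split; first exact: inl_hom.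
move=> Z g h _ _ e x; have := e x; rewrite /inl_zero /=; by case.
Qed.

Variable alpha : datum 'Z_2 XA.
Hypothesis Hres : is_restriction alpha sw inl.

Lemma R0 p : @dinc _ _ _ alpha 0 p = @dact _ _ _ alpha 0 p.
Proof. case: (Hres 0) => _ _ c _; have := c p; rewrite /= sw0 /inl_zero; by case. Qed.
Lemma R1i p : @dinc _ _ _ alpha 1 p = 0.
Proof. case: (Hres 1) => _ _ c _; have := c p; rewrite /= sw1 /inl_zero; by case. Qed.
Lemma R1a p : @dact _ _ _ alpha 1 p = 0.
Proof. case: (Hres 1) => _ _ c _; have := c p; rewrite /= sw1 /inl_zero; by case. Qed.

Lemma noref (Y : ncalg K) (b : 'Z_2 -> Y -> Y) (r : XA -> Y) :
  ~ is_reflection Z2op 0 alpha b r.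
Proof.
case=> gb [hr _] univ.
have dm1 : datum_mor alpha sw inl.
  split; first exact: inl_hom.
  by move=> m p; case: (Hres m) => _ _ c _; exact: c.
have [f' [[hf' f'b] f'r _]] := univ _ _ _ sw_global dm1.
pose triv := fun (m : 'Z_2) (x : XA) => x.
have gt : is_global Z2op 0 triv by split=> // m; exact: hom_id.
have dm2 : datum_mor alpha triv id.
  split; first exact: hom_id.
  move=> m; case: (Z2cases m) => -> p /=; first exact: R0.
  by rewrite R1i R1a.
have [h [[hh hb] hr' _]] := univ _ _ _ gt dm2.
set u := r 1; set v := b 1 u.
case: hr => _ _ _ hr4.
have [x' ex'] := hr4 1 v.
have hu : h u = 1 by exact: hr'.
have hv : h v = 1 by have := hb 1 u; rewrite /= -/v => ->; rewrite /triv hu.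
have : h (nc_mul u v) = 1 by rewrite (homM hh) hu hv /= mulr1.
rewrite ex' => ex1; have ex2 : x' = 1 by rewrite -ex1; exact: (esym (hr' x')).
have fu : f' u = (1, 0) by exact: f'r.
have fv : f' v = (0, 1) by have := f'b 1 u; rewrite /= -/v => ->; rewrite fu.
have := homM hf' u v; rewrite ex' ex2 -/u fu fv /= /prod_mul /= mulr0 mul0r.
case=> /eqP; by rewrite oner_eq0.
Qed.

Lemma glob_self : is_globalization Z2op 0 alpha sw inl.
Proof. split; [exact: sw_global | exact: inl_mono | exact: Hres]. Qed.

Section Univ.
Variables (Z : ncalg K) (g : 'Z_2 -> Z -> Z) (k : XA -> Z).
Hypothesis Hg : is_globalization Z2op 0 alpha g k.

Let gg : is_global Z2op 0 g. Proof. by case: Hg. Qed.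
Let hk : nc_hom k. Proof. by case: Hg => _ [] . Qed.
Let hg1 : nc_hom (g 1). Proof. by case: gg. Qed.
Let g11 z : g 1 (g 1 z) = z.
Proof. case: gg => _ g0 gc; have := gc 1 1 z; have -> : Z2op 1 1 = 0 by apply: val_inj. rewrite /= => ->; exact: g0. Qed.
Let hgk : nc_hom (g 1 \o k).
Proof.
split.
- by move=> a x y /=; rewrite (homD hk) (homZ hk) (homD hg1) (homZ hg1).
- by move=> x y /=; rewrite (homM hk) (homM hg1).
- move=> x y /=; case: hk => _ _ h3 _; have [x' e] := h3 x (g 1 y).
  by exists x'; rewrite -{1}(g11 y) -(homM hg1) e.
- move=> x y /=; case: hk => _ _ _ h4; have [x' e] := h4 x (g 1 y).
  by exists x'; rewrite -{1}(g11 y) -(homM hg1) e.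
Qed.

Definition Ep : pred XX := fun p => g 1 (k p.1) == k p.2.
Lemma Ep0 : Ep 0.
Proof. by rewrite /Ep /= !(hom0 hk) (hom0 hg1). Qed.
Lemma EpZD (a : K) x y : Ep x -> Ep y -> Ep (a *: x + y).
Proof.
rewrite /Ep => /eqP e1 /eqP e2 /=.
by rewrite !(homD hk) !(homZ hk) (homD hg1) (homZ hg1) e1 e2.
Qed.
Lemma EpM x y : Ep x -> Ep y -> Ep (nc_mul x y).
Proof.
rewrite /Ep => /eqP e1 /eqP e2 /=.
by rewrite !(homM hk) (homM hg1) e1 e2.
Qed.
Definition EA := subA Ep0 EpZD EpM.
Definition q1 (s : EA) : XA := (val s).1.
Definition q2 (s : EA) : XA := (val s).2.
Lemma q1_hom : nc_hom q1.
Proof.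
split; [by [] | by [] | |].
- move=> [[b a] /= Hs] y; rewrite /q1 /=.
  case: hk => _ _ h3 _; have [a' e] := h3 a (g 1 (k y)).
  have P : Ep (@nc_mul _ XA y b, a').
    by rewrite /Ep /= (homM hk) (homM hg1) (eqP Hs) e.
  by exists (exist (fun x => x \in subP Ep) _ P).
- move=> [[b a] /= Hs] y; rewrite /q1 /=.
  case: hk => _ _ _ h4; have [a' e] := h4 a (g 1 (k y)).
  have P : Ep (@nc_mul _ XA b y, a').
    by rewrite /Ep /= (homM hk) (homM hg1) (eqP Hs) e.
  by exists (exist (fun x => x \in subP Ep) _ P).
Qed.
Lemma q2_hom : nc_hom q2.
Proof.
split; [by [] | by [] | |].
- move=> [[b a] /= Hs] y; rewrite /q2 /=.
  case: hgk => _ _ h3 _; have [b' e] := h3 b (k y).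
  have P : Ep (b', @nc_mul _ XA y a).
    by rewrite /Ep /= (homM hk) -(eqP Hs); apply/eqP; exact: (esym e).
  by exists (exist (fun x => x \in subP Ep) _ P).
- move=> [[b a] /= Hs] y; rewrite /q2 /=.
  case: hgk => _ _ _ h4; have [b' e] := h4 b (k y).
  have P : Ep (b', @nc_mul _ XA a y).
    by rewrite /Ep /= (homM hk) -(eqP Hs); apply/eqP; exact: (esym e).
  by exists (exist (fun x => x \in subP Ep) _ P).
Qed.

Lemma key0 : nc_mul (k 1) (g 1 (k 1)) = 0.
Proof.
case: hk => _ _ h3 h4.
have [a ea] := h4 1 (g 1 (k 1)).
have [b eb] := h3 1 (g 1 (k 1)).
have eb' : nc_mul (k 1) (g 1 (k 1)) = g 1 (k b).
  by rewrite -{1}(g11 (k 1)) -(homM hg1) eb.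
have P : Ep (b, a) by rewrite /Ep /= -eb' ea.
case: Hg => _ _ /(_ 1) [_ _ _ pb].
have [u [_ pu _ _]] := pb _ _ _ q1_hom q2_hom (fun s => eqP (valP s)).
have := pu (exist (fun x => x \in subP Ep) _ P); rewrite /= R1i /q1 /= => b0.
by rewrite eb' -b0 (hom0 hk) (hom0 hg1).
Qed.

Lemma key x y : nc_mul (k x) (g 1 (k y)) = 0.
Proof.
have -> : k x = nc_mul (k x) (k 1) by rewrite -(homM hk) /= mulr1.
have -> : g 1 (k y) = nc_mul (g 1 (k 1)) (g 1 (k y)) by rewrite -(homM hg1) -(homM hk) /= mul1r.
by rewrite -nc_mulA [nc_mul (k 1) _]nc_mulA key0 mul0nc mulnc0.
Qed.
Lemma key' x y : nc_mul (g 1 (k y)) (k x) = 0.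
Proof.
rewrite -(g11 (nc_mul _ _)) (homM hg1) g11 key; exact: hom0 hg1.
Qed.

Definition kp (p : XX) : Z := k p.1 + g 1 (k p.2).

Lemma kp_hom : nc_hom kp.
Proof.
split.
- move=> a [x1 x2] [y1 y2]; rewrite /kp /=.
  rewrite !(homD hk) !(homZ hk) (homD hg1) (homZ hg1) scalerDr.
  by rewrite addrACA.
- move=> [x1 x2] [y1 y2]; rewrite /kp /= /prod_mul /=.
  rewrite nc_mulDl !nc_mulDr key key' addr0 add0r.
  by rewrite (homM hk) (homM hk) (homM hg1).
- move=> [x1 x2] y; rewrite /kp /=.
  case: hk => _ _ h3 _; have [x' e] := h3 x1 y.
  case: hgk => _ _ h3' _; have [x'' e'] := h3' x2 y.
  by exists (x', x''); rewrite /= nc_mulDr e; congr (_ + _); exact: e'.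
- move=> [x1 x2] y; rewrite /kp /=.
  case: hk => _ _ _ h4; have [x' e] := h4 x1 y.
  case: hgk => _ _ _ h4'; have [x'' e'] := h4' x2 y.
  by exists (x', x''); rewrite /= nc_mulDl e; congr (_ + _); exact: e'.
Qed.

Lemma kp_glob : global_mor sw g kp.
Proof.
split; first exact: kp_hom.
case: gg => _ g0 _.
move=> m [x1 x2]; case: (Z2cases m) => -> /=.
  by rewrite sw0 g0.
rewrite sw1 /kp /= (homD hg1) g11; exact: addrC.
Qed.

Lemma kp_inl : kp \o inl =1 k.
Proof. by move=> x; rewrite /kp /inl_zero /= (hom0 hk) (hom0 hg1) addr0. Qed.

Lemma kp_uniq k'' : global_mor sw g k'' -> k'' \o inl =1 k -> k'' =1 kp.
Proof.
case=> hk'' gk e [x1 x2].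
have -> : (x1, x2) = (inl x1 + sw 1 (inl x2) : XX).
  by rewrite sw1 /inl_zero /=; congr pair; rewrite ?addr0 ?add0r.
rewrite (homD hk'') /kp /=.
have := gk 1 (inl x2); rewrite /= => ->.
have e1 := e x1; have e2 := e x2; rewrite /= in e1 e2; by rewrite e1 e2 addr0 add0r.
Qed.
End Univ.

Lemma univ_glob : is_universal_globalization Z2op 0 alpha sw inl.
Proof.
split; first exact: glob_self.
move=> Z g k Hg; exists (kp g k); split.
- exact: kp_glob.
- exact: kp_inl.
- move=> k'' h1 h2; exact: kp_uniq.
Qed.
End Ex.

Unset Implicit Arguments.
Theorem mainTheorem19 (K : fieldType) (X : algType K)
    (alpha : datum 'Z_2 (ncalg_of_alg X)) :
  is_restriction alpha (@swap_action K (ncalg_of_alg X))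
    (@inl_zero K (ncalg_of_alg X)) ->
  is_universal_globalization Z2op 0 alpha (@swap_action K (ncalg_of_alg X))
    (@inl_zero K (ncalg_of_alg X)) /\
  ~ is_reflection Z2op 0 alpha (@swap_action K (ncalg_of_alg X))
      (@inl_zero K (ncalg_of_alg X)) /\
  ~ has_reflection Z2op 0 alpha.
Proof.
move=> H; split; first exact: univ_glob.
split; first exact: noref.
by case=> Y [b [r Hr]]; exact: (noref H Hr).
Qed.
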